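(* Let $G$ be a finite $p$-group ($p$ a prime) and $f\in\mathrm{Aut}(G)$. If $Q=\mathcal{Q}(G,f)$ is a latin, involutory, simply connected quandle, then $G$ is cyclic.
   Context: A quandle is a set $Q$ with a binary operation $*$ such that every left translation $L_x:y\mapsto x*y$ is bijective, $x*(y*z)=(x*y)*(x*z)$ and $x*x=x$. $\mathcal{Q}(G,f)$ is $G$ with $x*y=xf(x^{-1}y)$. $Q$ is latin if every right translation $y\mapsto y*x$ is bijective, involutory if $x*(x*y)=y$ for all $x,y$, and connected if $\langle L_x:x\in Q\rangle$ is transitive. For a set $S$, a quandle cocycle with values in $\mathrm{Sym}_S$ is $\theta:Q\times Q\to\mathrm{Sym}_S$ with $\theta_{x*y,x*z}\theta_{x,z}=\theta_{x,y*z}\theta_{y,z}$ and $\theta_{x,x}=1$; it is cohomologous to the trivial cocycle if there is $\gamma:Q\to\mathrm{Sym}_S$ with $\theta_{x,y}=\gamma_{x*y}\gamma_y^{-1}$ for all $x,y$. $Q$ is simply connected if it is connected and, for every set $S$, every such cocycle is cohomologous to the trivial cocycle. *)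

(* Defs.v *)
From HB Require Import structures.
From mathcomp Require Import all_boot all_fingroup all_solvable.
Set Implicit Arguments. Unset Strict Implicit. Unset Printing Implicit Defensive.

Local Open Scope group_scope.

Section QuandleDefs.
Variable gT : finGroupType.
Variable f : {perm gT}.

Definition qop (x y : gT) : gT := x * f (x^-1 * y).

Lemma qop_inj x : injective (qop x).
Proof.
by move=> y z; rewrite /qop => /mulgI /perm_inj /mulgI.
Qed.

Definition Lperm (x : gT) : {perm gT} := perm (@qop_inj x).

Definition q_latin : Prop := forall x : gT, bijective (fun y => qop y x).

Definition q_involutory : Prop := forall x y : gT, qop x (qop x y) = y.

Definition q_connected : Prop :=
  [transitive <<[set Lperm x | x : gT]>>, on [set: gT] | 'P].

Definition q_cocycle (S : Type) (theta : gT -> gT -> S -> S) : Prop :=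
  [/\ forall x y, bijective (theta x y),
      forall x y z, theta (qop x y) (qop x z) \o theta x z
                    =1 theta x (qop y z) \o theta y z
    & forall x, theta x x =1 id].

Definition q_coboundary (S : Type) (theta : gT -> gT -> S -> S) : Prop :=
  exists gamma gammainv : gT -> S -> S,
    (forall x, cancel (gamma x) (gammainv x) /\ cancel (gammainv x) (gamma x))
    /\ forall x y, theta x y =1 gamma (qop x y) \o gammainv y.

Definition q_simply_connected : Prop :=
  q_connected /\
  forall (S : Type) (theta : gT -> gT -> S -> S),
    q_cocycle theta -> q_coboundary theta.

End QuandleDefs.

(* Main.v *)
Require Import Defs.
From HB Require Import structures.
From mathcomp Require Import all_boot all_fingroup all_solvable all_algebra all_character.
Set Implicit Arguments. Unset Strict Implicit. Unset Printing Implicit Defensive.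
From mathcomp Require Import ring zify.
Import GRing.Theory.

Local Open Scope ring_scope.
Lemma key (gT : finGroupType) (f : {perm gT}) (R : comRingType)
  (c0 c1 : gT -> R) (a b : gT) :
  (2%:R : R) != 0 ->
  (forall x y, c0 (x * y)%g = c0 x + c0 y) ->
  (forall x y, c1 (x * y)%g = c1 x + c1 y) ->
  (forall x, c0 x^-1%g = - c0 x) ->
  (forall x, c1 x^-1%g = - c1 x) ->
  c0 a = 1 -> c1 a = 0 -> c0 b = 0 -> c1 b = 1 ->
  (forall x, f x = x^-1%g) ->
  q_latin f ->
  (forall (S : Type) (theta : gT -> gT -> S -> S),
    q_cocycle f theta -> q_coboundary f theta) -> False.
Proof.
move=> n2 c0M c1M c0V c1V a0 a1 b0 b1 fV lat sc.
have qopE x y : qop f x y = (x * (y^-1 * x))%g by rewrite /qop fV invMg invgK.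
have c0q x y : c0 (qop f x y) = 2%:R * c0 x - c0 y.
  by rewrite qopE c0M c0M c0V; ring.
have c1q x y : c1 (qop f x y) = 2%:R * c1 x - c1 y.
  by rewrite qopE c1M c1M c1V; ring.
have c01 : c0 1%g = 0.
  by have := congr1 (fun t => t - c0 1%g) (c0M 1%g 1%g); rewrite mulg1 subrr addrK.
have c11 : c1 1%g = 0.
  by have := congr1 (fun t => t - c1 1%g) (c1M 1%g 1%g); rewrite mulg1 subrr addrK.
pose om x y := c0 x * c1 y - c1 x * c0 y.
pose theta x y := fun s : R => s + om x y.
have coc : q_cocycle f theta.
  split.
  - by move=> x y; exists (fun s => s - om x y) => s; rewrite /theta ?addrK ?subrK.
  - move=> x y z s; rewrite /theta /om /= !c0q !c1q; ring.
  - by move=> x s; rewrite /theta /om mulrC subrr addr0.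
have [gam [gami [gK thE]]] := sc _ _ coc.
pose y2 := qop f b 1%g.
pose y3 := qop f a y2.
have [g gK1 gK2] := lat y3.
pose x4 := g 1%g.
have e4 : qop f x4 y3 = 1%g by rewrite /x4 gK2.
have : theta x4 y3 (theta a y2 (theta b 1%g 0)) = 0.
  rewrite !thE /=.
  rewrite (proj1 (gK _)) /y3 (proj1 (gK _)) e4 (proj2 (gK _)) //.
have h0 : c0 y3 = 2%:R * c0 x4 by have := c0q x4 y3; rewrite e4 c01 => /eqP; rewrite eq_sym subr_eq0 => /eqP.
have h1 : c1 y3 = 2%:R * c1 x4 by have := c1q x4 y3; rewrite e4 c11 => /eqP; rewrite eq_sym subr_eq0 => /eqP.
rewrite /theta /om h0 h1 /y2 !c0q !c1q a0 a1 b0 b1 c01 c11.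
have -> : 0 + (0 * 0 - 1 * 0) + (1 * (2%:R * 1 - 0) - 0 * (2%:R * 0 - 0)) +
   (c0 x4 * (2%:R * c1 x4) - c1 x4 * (2%:R * c0 x4)) = 2%:R :> R by ring.
by move/eqP; rewrite (negbTE n2).
Qed.

Local Close Scope ring_scope.
Lemma main (gT : finGroupType) (p : nat) (f : {perm gT}) :
  prime p -> (p.-group [set: gT])%g -> (f \in Aut [set: gT])%g ->
  q_latin f -> q_involutory f -> q_simply_connected f ->
  cyclic [set: gT].
Proof.
move=> pr pG Af lat inv [_ sc].
have fM : {in [set: gT] &, {morph f : x y / (x * y)%g}} := morphicP (Aut_morphic Af).
have fV' x : f x^-1%g = (f x)^-1%g.
  by rewrite -(autmE Af) morphV ?inE.
have ff y : f (f y) = y by have := inv 1%g y; rewrite /qop !invg1 !mul1g.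
have [g gK1 gK2] := lat 1%g.
have fV z : f z = z^-1%g.
  rewrite -(gK2 z) /qop mulg1; set y0 := g z.
  by rewrite fM ?inE // ff fV' invMg invgK.
have sq y : qop f y 1%g = (y * y)%g by rewrite /qop mulg1 fV invgK.
case: (boolP (cyclic [set: gT])) => // ncyc; exfalso.
have ntG : [set: gT] :!=: 1%g by apply: contraNneq ncyc => ->; exact: cyclic1.
have [_ pdvd _] := pgroup_pdiv pG ntG.
have [x _ ox] := Cauchy pr pdvd.
have p2 : p != 2.
  apply/eqP => p2; move: (expg_order x); rewrite ox p2 expgS expg1 => xx.
  have : qop f x 1%g = qop f 1%g 1%g by rewrite !sq xx mulg1.
  move/(can_inj gK1) => x1; move: ox; rewrite x1 order1 => p1.
  by move: pr; rewrite -p1.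
have abelE := Phi_quotient_abelem pG.
set E := ([set: gT] / 'Phi([set: gT]))%g in abelE.
have ncE : ~~ cyclic E by apply: contra ncyc; exact: Phi_quotient_cyclic.
have ntE : (E :!=: 1)%g by apply: contraNneq ncE => ->; exact: cyclic1.
have := dim_abelemE abelE ntE; rewrite (abelem_cyclic abelE) -ltnNge in ncE.
move=> dimE; rewrite -dimE in ncE.
pose i1 := Ordinal ncE.
pose H := ('Phi([set: gT]))%g.
have nH y : y \in ('N(H))%g by apply: (subsetP (normal_norm (Phi_normal [set: gT]))); rewrite inE.
have qE y : coset H y \in E by apply: mem_quotient; rewrite inE.
pose c y := abelem_rV abelE ntE (coset H y).
have cM y z : c (y * z)%g = (c y + c z)%R.
  by rewrite /c morphM ?nH // (abelem_rV_M abelE ntE) ?qE.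
have cV y : c y^-1%g = (- c y)%R.
  by rewrite /c morphV ?nH // (abelem_rV_V abelE ntE) ?qE.
pose c0 y := c y ord0 ord0.
pose c1 y := c y ord0 i1.
pose a := repr (rVabelem abelE ntE (delta_mx ord0 ord0)).
pose b := repr (rVabelem abelE ntE (delta_mx ord0 i1)).
have ca : c a = delta_mx ord0 ord0 by rewrite /c /a coset_reprK rVabelemK.
have cb : c b = delta_mx ord0 i1 by rewrite /c /b coset_reprK rVabelemK.
apply: (@key gT f _ c0 c1 a b).
- rewrite -(dvdn_pcharf (pchar_Fp pr)); apply: contra p2 => /(dvdn_leq (isT : 0 < 2)) p2.
  have := prime_gt1 pr; move: p2 => p3 p1.
  by apply/eqP; lia.
- by move=> y z; rewrite /c0 cM mxE.
- by move=> y z; rewrite /c1 cM mxE.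
- by move=> y; rewrite /c0 cV mxE.
- by move=> y; rewrite /c1 cV mxE.
- by rewrite /c0 ca mxE.
- by rewrite /c1 ca mxE.
- by rewrite /c0 cb mxE.
- by rewrite /c1 cb mxE.
- exact: fV.
- exact: lat.
- exact: sc.
Qed.

Theorem proposition4p6 (gT : finGroupType) (p : nat) (f : {perm gT}) :
  prime p -> (p.-group [set: gT])%g -> (f \in Aut [set: gT])%g ->
  q_latin f -> q_involutory f -> q_simply_connected f ->
  cyclic [set: gT].
Proof. exact: main. Qed.
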